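(* Let $T$ be a unital endomorphism of $C^1[0,1]$ induced by the selfmap $\phi$ of $[0,1]$, i.e. $Tf=f\circ\phi$. Then $T$ is a Riesz operator if and only if $\bigcap_{n=0}^\infty\phi_n([0,1])=\{x_0\}$ for some $x_0\in[0,1]$ and $\phi'(x_0)=0$.
   Context: $C^1[0,1]$ is the Banach algebra of continuously differentiable functions on $[0,1]$ with norm $\|f\|_{C^1}=\|f\|_\infty+\|f'\|_\infty$. Unital endomorphisms of $C^1[0,1]$ are of the form $f\mapsto f\circ\phi$ for a selfmap $\phi$ of $[0,1]$ (necessarily $\phi\in C^1[0,1]$). $\phi_n$ denotes the $n$-th iterate of $\phi$ ($\phi_0$ the identity). A bounded operator $T$ is a Riesz operator if $\lim_{n}\left[\inf\{\|T^n-K\|:K \text{ compact}\}\right]^{1/n}=0$. *)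

(* Defs.v *)
From Stdlib Require Import Reals Lra.
From Coquelicot Require Import Coquelicot.
Open Scope R_scope.

(* Functions are R -> R; only their values on [0,1] matter. *)
Definition in01 (x : R) : Prop := 0 <= x <= 1.

Definition has_deriv01 (f : R -> R) (x d : R) : Prop :=
  forall eps, 0 < eps -> exists delta, 0 < delta /\
    forall y, in01 y -> y <> x -> Rabs (y - x) < delta ->
      Rabs ((f y - f x) / (y - x) - d) < eps.

Definition cont01 (g : R -> R) (x : R) : Prop :=
  forall eps, 0 < eps -> exists delta, 0 < delta /\
    forall y, in01 y -> Rabs (y - x) < delta -> Rabs (g y - g x) < eps.

Definition isC1 (f : R -> R) : Prop :=
  exists g : R -> R, (forall x, in01 x -> has_deriv01 f x (g x)) /\
                     (forall x, in01 x -> cont01 g x).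

Definition supnorm01 (f : R -> R) : R :=
  real (Lub_Rbar (fun r => exists x, in01 x /\ r = Rabs (f x))).

(* ||f'||_inf on [0,1] (the derivative relative to [0,1] is unique) *)
Definition dsupnorm01 (f : R -> R) : R :=
  real (Lub_Rbar (fun r => exists x d, in01 x /\ has_deriv01 f x d /\ r = Rabs d)).

Definition c1norm (f : R -> R) : R := supnorm01 f + dsupnorm01 f.

Definition op := (R -> R) -> (R -> R).

Definition opnorm (L : op) : R :=
  real (Lub_Rbar (fun r => exists f, isC1 f /\ c1norm f <= 1 /\ r = c1norm (L f))).

Definition linear_C1 (K : op) : Prop :=
  (forall f, isC1 f -> isC1 (K f)) /\
  forall (a b : R) f g, isC1 f -> isC1 g -> forall x, in01 x ->
    K (fun y => a * f y + b * g y) x = a * K f x + b * K g x.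

Definition compact_op (K : op) : Prop :=
  linear_C1 K /\
  forall u : nat -> R -> R, (forall k, isC1 (u k) /\ c1norm (u k) <= 1) ->
    exists (s : nat -> nat) (g : R -> R),
      (forall k, (s k < s (S k))%nat) /\ isC1 g /\
      is_lim_seq (fun k => c1norm (fun x => K (u (s k)) x - g x)) 0.

Definition comp_op (phi : R -> R) : op := fun f x => f (phi x).
Definition op_pow (T : op) (n : nat) : op := fun f => Nat.iter n T f.
Definition op_sub (A B : op) : op := fun f x => A f x - B f x.

Definition ess_norm (A : op) : R :=
  real (Glb_Rbar (fun r => exists K, compact_op K /\ r = opnorm (op_sub A K))).

Definition nroot (x : R) (n : nat) : R :=
  match Rlt_dec 0 x with left _ => Rpower x (/ INR n) | right _ => 0 end.

Definition Riesz (T : op) : Prop :=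
  is_lim_seq (fun n => nroot (ess_norm (op_pow T n)) n) 0.

(* Main.v *)
Require Import Defs.
From Stdlib Require Import Reals Lra Lia ClassicalEpsilon Classical FunctionalExtensionality.
From Coquelicot Require Import Coquelicot.
Open Scope R_scope.

Ltac rabs := repeat match goal with
 | |- context [Rabs ?a] => destruct (Rcase_abs a); [rewrite (Rabs_left a) by assumption | rewrite (Rabs_right a) by assumption]
 | H : context [Rabs ?a] |- _ => destruct (Rcase_abs a); [rewrite (Rabs_left a) in H by assumption | rewrite (Rabs_right a) in H by assumption]
 end.

Lemma Rmin_lt a b c : a < Rmin b c -> a < b /\ a < c.
Proof. unfold Rmin; destruct Rle_dec; lra. Qed.
Lemma Rmin_pos b c : 0 < b -> 0 < c -> 0 < Rmin b c.
Proof. unfold Rmin; destruct Rle_dec; lra. Qed.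

Lemma in01_between u v c : in01 u -> in01 v -> Rmin u v <= c <= Rmax u v -> in01 c.
Proof. unfold in01, Rmin, Rmax; destruct Rle_dec; lra. Qed.

Lemma Rabs_m1 : Rabs (-1) = 1.
Proof. rewrite Rabs_left; lra. Qed.

Definition clamp (x : R) : R := Rmax 0 (Rmin 1 x).

Lemma clamp_in x : in01 (clamp x).
Proof. unfold in01, clamp, Rmax, Rmin; repeat destruct Rle_dec; lra. Qed.

Lemma clamp_id x : in01 x -> clamp x = x.
Proof. unfold in01, clamp, Rmax, Rmin; intros; repeat destruct Rle_dec; lra. Qed.

Lemma clamp_lip x y : Rabs (clamp x - clamp y) <= Rabs (x - y).
Proof. unfold clamp, Rmax, Rmin; repeat destruct Rle_dec; rabs; lra. Qed.

Lemma cpt_of_cont01 g x : cont01 g (clamp x) -> continuity_pt (fun t => g (clamp t)) x.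
Proof.
  intros H. unfold continuity_pt, continue_in, limit1_in, limit_in. intros eps Heps.
  destruct (H eps Heps) as [d [Hd Hy]]. exists d. split; [lra|].
  intros y [_ Hyx]. simpl in *. unfold R_dist in *. apply Hy. apply clamp_in.
  eapply Rle_lt_trans; [apply clamp_lip|exact Hyx].
Qed.

Lemma cont01_of_cpt g x : in01 x -> continuity_pt (fun t => g (clamp t)) x -> cont01 g x.
Proof.
  intros Hx H eps Heps.
  destruct (H eps Heps) as [d [Hd Hy]]. exists d. split; [lra|].
  intros y Hyi Hyx. destruct (Req_dec y x) as [->|Hne].
  - rewrite Rminus_eq_0, Rabs_R0; lra.
  - specialize (Hy y). simpl in Hy. unfold R_dist in Hy. rewrite !clamp_id in Hy by auto.
    apply Hy. split; [split; [exact I| auto]| exact Hyx].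
Qed.

Lemma cont01_ext_all g : (forall x, in01 x -> cont01 g x) -> continuity (fun t => g (clamp t)).
Proof. intros H x. apply cpt_of_cont01, H, clamp_in. Qed.

Lemma exists_near x d : in01 x -> 0 < d -> exists y, in01 y /\ y <> x /\ Rabs (y - x) < d.
Proof.
  intros Hx Hd. unfold in01 in *. set (t := Rmin d 1 / 2).
  assert (0 < t /\ t < d /\ t <= 1/2) by (unfold t, Rmin; destruct Rle_dec; lra).
  destruct (Rle_dec x (1/2)).
  - exists (x + t). split; [lra|split; [lra|]]. rabs; lra.
  - exists (x - t). split; [lra|split; [lra|]]. rabs; lra.
Qed.

Lemma deriv_lin f x d : has_deriv01 f x d -> forall eps, 0 < eps -> exists delta, 0 < delta /\
  forall y, in01 y -> Rabs (y - x) < delta -> Rabs (f y - f x - d * (y - x)) <= eps * Rabs (y - x).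
Proof.
  intros H eps Heps. destruct (H eps Heps) as [dl [Hdl Hy]]. exists dl. split; auto.
  intros y Hyi Hyx. destruct (Req_dec y x) as [->|Hne].
  - replace (f x - f x - d * (x - x)) with 0 by ring. rewrite Rminus_eq_0, !Rabs_R0; lra.
  - specialize (Hy y Hyi Hne Hyx).
    replace (f y - f x - d * (y - x)) with (((f y - f x) / (y - x) - d) * (y - x)) by (field; lra).
    rewrite Rabs_mult. apply Rmult_le_compat_r; [apply Rabs_pos|lra].
Qed.

Lemma lin_deriv f x d : (forall eps, 0 < eps -> exists delta, 0 < delta /\
  forall y, in01 y -> y <> x -> Rabs (y - x) < delta -> Rabs (f y - f x - d * (y - x)) <= eps * Rabs (y - x))
  -> has_deriv01 f x d.
Proof.
  intros H eps Heps. destruct (H (eps/2)) as [dl [Hdl Hy]]; [lra|]. exists dl. split; auto.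
  intros y Hyi Hne Hyx. specialize (Hy y Hyi Hne Hyx).
  assert (Hp : 0 < Rabs (y - x)) by (apply Rabs_pos_lt; lra).
  replace ((f y - f x) / (y - x) - d) with ((f y - f x - d * (y - x)) / (y - x)) by (field; lra).
  rewrite Rabs_div by lra. apply (Rmult_lt_reg_r (Rabs (y - x))); auto.
  unfold Rdiv. rewrite Rmult_assoc, Rinv_l by lra. unfold Rdiv in Hy. nra.
Qed.

Lemma deriv_cont f x d : has_deriv01 f x d -> cont01 f x.
Proof.
  intros H eps Heps. destruct (deriv_lin f x d H 1 Rlt_0_1) as [dl [Hdl Hy]].
  set (c := Rabs d + 1).
  assert (Hc : 0 < c) by (unfold c; pose proof (Rabs_pos d); lra).
  exists (Rmin dl (eps / c)). split.
  { unfold Rmin; destruct Rle_dec; [lra| apply Rdiv_lt_0_compat; lra]. }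
  intros y Hyi Hyx. assert (H1 : Rabs (y - x) < dl) by (unfold Rmin in Hyx; destruct Rle_dec in Hyx; lra).
  assert (H2 : Rabs (y - x) < eps / c) by (unfold Rmin in Hyx; destruct Rle_dec in Hyx; lra).
  specialize (Hy y Hyi H1).
  assert (H3 : Rabs (f y - f x) <= c * Rabs (y - x)).
  { replace (f y - f x) with ((f y - f x - d * (y - x)) + d * (y - x)) by ring.
    eapply Rle_trans; [apply Rabs_triang|]. rewrite Rabs_mult. unfold c. lra. }
  assert (c * Rabs (y - x) < eps).
  { apply (Rmult_lt_compat_l c) in H2; auto. replace (c * (eps / c)) with eps in H2 by (field; lra). lra. }
  lra.
Qed.

Lemma deriv_unique f x d1 d2 : in01 x -> has_deriv01 f x d1 -> has_deriv01 f x d2 -> d1 = d2.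
Proof.
  intros Hx H1 H2. apply NNPP; intro Hne.
  set (e := Rabs (d1 - d2) / 2).
  assert (He : 0 < e) by (unfold e; assert (0 < Rabs (d1 - d2)) by (apply Rabs_pos_lt; lra); lra).
  destruct (H1 e He) as [a [Ha Hya]]. destruct (H2 e He) as [b [Hb Hyb]].
  destruct (exists_near x (Rmin a b) Hx) as [y [Hy [Hyx Hd]]].
  { unfold Rmin; destruct Rle_dec; lra. }
  assert (Rabs (y - x) < a) by (unfold Rmin in Hd; destruct Rle_dec in Hd; lra).
  assert (Rabs (y - x) < b) by (unfold Rmin in Hd; destruct Rle_dec in Hd; lra).
  specialize (Hya y Hy Hyx H). specialize (Hyb y Hy Hyx H0).
  set (q := (f y - f x) / (y - x)) in *.
  assert (Rabs (d1 - d2) <= Rabs (q - d1) + Rabs (q - d2)).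
  { replace (d1 - d2) with (-(q - d1) + (q - d2)) by ring.
    eapply Rle_trans; [apply Rabs_triang|]. rewrite Rabs_Ropp. lra. }
  unfold e in *. lra.
Qed.

Lemma deriv_ext f h x d : in01 x -> (forall y, in01 y -> f y = h y) -> has_deriv01 f x d -> has_deriv01 h x d.
Proof.
  intros Hx He H eps Heps. destruct (H eps Heps) as [dl [Hdl Hy]]. exists dl. split; auto.
  intros y Hyi Hne Hyx. rewrite <- !He by auto. auto.
Qed.

Lemma cont01_ext g h x : in01 x -> (forall y, in01 y -> g y = h y) -> cont01 g x -> cont01 h x.
Proof.
  intros Hx He H eps Heps. destruct (H eps Heps) as [dl [Hdl Hy]]. exists dl. split; auto.
  intros y Hyi Hyx. rewrite <- !He by auto. auto.
Qed.

Lemma deriv_of_is_derive f x d : is_derive f x d -> has_deriv01 f x d.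
Proof.
  intros H. apply is_derive_Reals in H. intros eps Heps. destruct (H eps Heps) as [dl Hdl].
  exists dl. split; [apply cond_pos|]. intros y Hyi Hne Hyx.
  specialize (Hdl (y - x)). replace (x + (y - x)) with y in Hdl by ring. apply Hdl; auto. lra.
Qed.

Lemma deriv_lincomb f g x a b p q : has_deriv01 f x a -> has_deriv01 g x b ->
  has_deriv01 (fun y => p * f y + q * g y) x (p * a + q * b).
Proof.
  intros Hf Hg. apply lin_deriv. intros eps Heps.
  set (c := Rabs p + Rabs q + 1).
  assert (Hc : 0 < c) by (unfold c; pose proof (Rabs_pos p); pose proof (Rabs_pos q); lra).
  destruct (deriv_lin f x a Hf (eps / c)) as [d1 [Hd1 H1]]; [apply Rdiv_lt_0_compat; lra|].
  destruct (deriv_lin g x b Hg (eps / c)) as [d2 [Hd2 H2]]; [apply Rdiv_lt_0_compat; lra|].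
  exists (Rmin d1 d2). split; [unfold Rmin; destruct Rle_dec; lra|].
  intros y Hy Hne Hyx.
  assert (Rabs (y - x) < d1) by (unfold Rmin in Hyx; destruct Rle_dec in Hyx; lra).
  assert (Rabs (y - x) < d2) by (unfold Rmin in Hyx; destruct Rle_dec in Hyx; lra).
  specialize (H1 y Hy H). specialize (H2 y Hy H0).
  replace (p * f y + q * g y - (p * f x + q * g x) - (p * a + q * b) * (y - x))
    with (p * (f y - f x - a * (y - x)) + q * (g y - g x - b * (y - x))) by ring.
  eapply Rle_trans; [apply Rabs_triang|]. rewrite !Rabs_mult.
  assert (Rabs p * Rabs (f y - f x - a * (y - x)) <= Rabs p * (eps / c * Rabs (y - x)))
    by (apply Rmult_le_compat_l; [apply Rabs_pos| lra]).
  assert (Rabs q * Rabs (g y - g x - b * (y - x)) <= Rabs q * (eps / c * Rabs (y - x)))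
    by (apply Rmult_le_compat_l; [apply Rabs_pos| lra]).
  assert ((Rabs p + Rabs q) * (eps / c) <= eps).
  { apply (Rmult_le_reg_r c); auto. unfold Rdiv. rewrite Rmult_assoc, (Rmult_assoc eps), Rinv_l by lra.
    unfold c. pose proof (Rabs_pos p); pose proof (Rabs_pos q). nra. }
  pose proof (Rabs_pos (y - x)). nra.
Qed.
Lemma deriv_chain psi f x a b : in01 x -> (forall y, in01 y -> in01 (psi y)) ->
  has_deriv01 psi x a -> has_deriv01 f (psi x) b ->
  has_deriv01 (fun y => f (psi y)) x (b * a).
Proof.
  intros Hx Hm Hp Hf. apply lin_deriv. intros eps Heps.
  set (Bc := Rabs b + 1). assert (HB : 0 < Bc) by (unfold Bc; pose proof (Rabs_pos b); lra).
  set (e1 := Rmin 1 (eps / (2 * Bc))).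
  assert (He1 : 0 < e1 /\ e1 <= 1 /\ e1 <= eps / (2 * Bc)).
  { unfold e1, Rmin; destruct Rle_dec; split; try lra; apply Rdiv_lt_0_compat; lra. }
  destruct He1 as [He1a [He1b He1c]].
  set (A := Rabs a + 1). assert (HA : 0 < A) by (unfold A; pose proof (Rabs_pos a); lra).
  set (e2 := eps / (2 * A)). assert (He2 : 0 < e2) by (apply Rdiv_lt_0_compat; lra).
  destruct (deriv_lin psi x a Hp e1 He1a) as [d1 [Hd1 H1]].
  destruct (deriv_lin f (psi x) b Hf e2 He2) as [d2 [Hd2 H2]].
  destruct (deriv_cont psi x a Hp d2 Hd2) as [d3 [Hd3 H3]].
  exists (Rmin d1 d3). split; [unfold Rmin; destruct Rle_dec; lra|].
  intros y Hy Hne Hyx.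
  assert (Rabs (y - x) < d1) by (unfold Rmin in Hyx; destruct Rle_dec in Hyx; lra).
  assert (Rabs (y - x) < d3) by (unfold Rmin in Hyx; destruct Rle_dec in Hyx; lra).
  specialize (H1 y Hy H). specialize (H3 y Hy H0). specialize (H2 (psi y) (Hm y Hy) H3).
  set (u := psi y - psi x) in *. set (t := y - x) in *.
  assert (Hu : Rabs u <= A * Rabs t).
  { replace u with ((u - a * t) + a * t) by ring.
    eapply Rle_trans; [apply Rabs_triang|]. rewrite Rabs_mult.
    assert (e1 * Rabs t <= 1 * Rabs t) by (apply Rmult_le_compat_r; [apply Rabs_pos|lra]).
    unfold A. lra. }
  replace (f (psi y) - f (psi x) - b * a * t) with
     ((f (psi y) - f (psi x) - b * u) + b * (u - a * t)) by (unfold u; ring).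
  eapply Rle_trans; [apply Rabs_triang|]. rewrite Rabs_mult.
  assert (Ht := Rabs_pos t).
  assert (E1 : e2 * Rabs u <= eps / 2 * Rabs t).
  { unfold e2. apply Rle_trans with (eps / (2 * A) * (A * Rabs t)).
    - apply Rmult_le_compat_l; [apply Rlt_le, Rdiv_lt_0_compat; lra|auto].
    - right. field. lra. }
  assert (E2 : Rabs b * Rabs (u - a * t) <= eps / 2 * Rabs t).
  { apply Rle_trans with (Rabs b * (e1 * Rabs t)).
    - apply Rmult_le_compat_l; [apply Rabs_pos|auto].
    - apply Rle_trans with (Bc * (eps / (2 * Bc)) * Rabs t).
      + rewrite <- Rmult_assoc. apply Rmult_le_compat_r; auto.
        assert (Rabs b <= Bc) by (unfold Bc; lra).
        pose proof (Rabs_pos b). apply Rmult_le_compat; lra.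
      + right. field. lra. }
  lra.
Qed.

Lemma cpt_mult f g x : continuity_pt f x -> continuity_pt g x -> continuity_pt (fun t => f t * g t) x.
Proof. intros; apply (continuity_pt_ext (f * g)%F); [intro; reflexivity|apply continuity_pt_mult; auto]. Qed.
Lemma cpt_lin f g p q x : continuity_pt f x -> continuity_pt g x -> continuity_pt (fun t => p * f t + q * g t) x.
Proof.
  intros; apply (continuity_pt_ext (mult_real_fct p f + mult_real_fct q g)%F); [intro; reflexivity|].
  apply continuity_pt_plus; apply continuity_pt_scal; auto.
Qed.
Lemma cpt_comp f g x : continuity_pt f x -> continuity_pt g (f x) -> continuity_pt (fun t => g (f t)) x.
Proof. intros; apply (continuity_pt_ext (comp g f)); [intro; reflexivity|apply continuity_pt_comp; auto]. Qed.

Lemma cont01_lin f g p q x : in01 x -> cont01 f x -> cont01 g x -> cont01 (fun t => p * f t + q * g t) x.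
Proof.
  intros Hx Hf Hg. apply cont01_of_cpt; auto.
  apply cpt_lin; apply cpt_of_cont01; rewrite clamp_id; auto.
Qed.

Lemma cont01_mult f g x : in01 x -> cont01 f x -> cont01 g x -> cont01 (fun t => f t * g t) x.
Proof.
  intros Hx Hf Hg. apply cont01_of_cpt; auto.
  apply cpt_mult; apply cpt_of_cont01; rewrite clamp_id; auto.
Qed.

Lemma cont01_comp psi f x : in01 x -> (forall y, in01 y -> in01 (psi y)) ->
  cont01 psi x -> cont01 f (psi x) -> cont01 (fun t => f (psi t)) x.
Proof.
  intros Hx Hm Hp Hf. apply cont01_of_cpt; auto.
  apply (continuity_pt_ext (fun t => f (clamp (psi (clamp t))))).
  { intro t. simpl. rewrite clamp_id; auto. apply Hm, clamp_in. }
  apply (cpt_comp (fun s => psi (clamp s)) (fun u => f (clamp u))).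
  - apply cpt_of_cont01. rewrite clamp_id; auto.
  - apply cpt_of_cont01. rewrite !clamp_id; auto. rewrite clamp_id; auto.
Qed.

Lemma cont01_const c x : cont01 (fun _ => c) x.
Proof. intros eps Heps. exists 1. split; [lra|]. intros. rewrite Rminus_eq_0, Rabs_R0; lra. Qed.

Lemma cont01_of_cpt' g x : continuity_pt g x -> cont01 g x.
Proof.
  intros H eps Heps. destruct (H eps Heps) as [d [Hd Hy]]. exists d. split; [lra|].
  intros y Hyi Hyx. destruct (Req_dec y x) as [->|Hne].
  - rewrite Rminus_eq_0, Rabs_R0; lra.
  - apply (Hy y). split; [split; [exact I|auto]|exact Hyx].
Qed.

Lemma isC1_ext f h : (forall y, in01 y -> f y = h y) -> isC1 f -> isC1 h.
Proof.
  intros He [g [Hd Hc]]. exists g. split; auto. intros x Hx. eapply deriv_ext; eauto.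
Qed.

Lemma isC1_lin f g p q : isC1 f -> isC1 g -> isC1 (fun y => p * f y + q * g y).
Proof.
  intros [gf [Hf Hcf]] [gg [Hg Hcg]]. exists (fun y => p * gf y + q * gg y). split.
  - intros x Hx. apply deriv_lincomb; auto.
  - intros x Hx. apply cont01_lin; auto.
Qed.

Lemma isC1_comp psi f : (forall y, in01 y -> in01 (psi y)) -> isC1 psi -> isC1 f -> isC1 (fun y => f (psi y)).
Proof.
  intros Hm [gp [Hp Hcp]] [gf [Hf Hcf]]. exists (fun y => gf (psi y) * gp y). split.
  - intros x Hx. apply deriv_chain; auto.
  - intros x Hx. apply cont01_mult; auto. apply cont01_comp; auto.
    eapply deriv_cont; eauto.
Qed.

Lemma isC1_global f df : (forall x, is_derive f x (df x)) -> (forall x, continuity_pt df x) -> isC1 f.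
Proof.
  intros Hd Hc. exists df. split; intros x Hx.
  - apply deriv_of_is_derive; auto.
  - apply cont01_of_cpt'; auto.
Qed.

Lemma isC1_const c : isC1 (fun _ => c).
Proof.
  apply isC1_global with (fun _ => 0).
  - intro x. auto_derive; auto.
  - intro x. apply continuity_pt_const. intros a b; reflexivity.
Qed.

Lemma cont_bounded g : (forall x, in01 x -> cont01 g x) -> exists B, 0 <= B /\ forall x, in01 x -> Rabs (g x) <= B.
Proof.
  intros H. pose proof (cont01_ext_all g H) as Hc.
  destruct (continuity_ab_maj (fun t => g (clamp t)) 0 1 Rle_0_1 (fun c _ => Hc c)) as [M [HM HMi]].
  destruct (continuity_ab_min (fun t => g (clamp t)) 0 1 Rle_0_1 (fun c _ => Hc c)) as [m [Hm Hmi]].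
  exists (Rabs (g (clamp M)) + Rabs (g (clamp m))). split.
  { pose proof (Rabs_pos (g (clamp M))); pose proof (Rabs_pos (g (clamp m))); lra. }
  intros x Hx. specialize (HM x Hx). specialize (Hm x Hx). simpl in *. rewrite (clamp_id x Hx) in HM, Hm.
  rabs; lra.
Qed.

Lemma isC1_bounded f : isC1 f -> exists gf B, 0 <= B /\ (forall x, in01 x -> has_deriv01 f x (gf x)) /\
  forall x, in01 x -> Rabs (f x) <= B /\ Rabs (gf x) <= B.
Proof.
  intros [gf [Hd Hc]]. destruct (cont_bounded gf Hc) as [B1 [HB1 H1]].
  destruct (cont_bounded f) as [B2 [HB2 H2]].
  { intros x Hx. eapply deriv_cont; eauto. }
  exists gf, (B1 + B2). split; [lra|]. split; auto. intros x Hx.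
  specialize (H1 x Hx); specialize (H2 x Hx). lra.
Qed.

Lemma deriv_interior h x d : 0 < x < 1 -> has_deriv01 h x d -> is_derive (fun t => h (clamp t)) x d.
Proof.
  intros Hx H. apply is_derive_Reals. intros eps Heps.
  destruct (H eps Heps) as [dl [Hdl Hy]].
  assert (Hp : 0 < Rmin dl (Rmin x (1 - x))) by (repeat apply Rmin_pos; lra).
  exists (mkposreal _ Hp). intros k Hk Hkd. simpl in Hkd.
  destruct (Rmin_lt _ _ _ Hkd) as [Hk1 Hk2]. destruct (Rmin_lt _ _ _ Hk2) as [Hk3 Hk4].
  assert (in01 (x + k)) by (unfold in01; rabs; lra).
  rewrite !clamp_id by (auto; unfold in01; lra).
  specialize (Hy (x + k) H0). replace (x + k - x) with k in Hy by ring. apply Hy; auto; lra.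
Qed.

Lemma MVT01 h dh u v : (forall x, in01 x -> has_deriv01 h x (dh x)) -> in01 u -> in01 v ->
  exists c, in01 c /\ Rmin u v <= c <= Rmax u v /\ h v - h u = dh c * (v - u).
Proof.
  intros Hd Hu Hv.
  assert (Hin : forall c, Rmin u v <= c <= Rmax u v -> in01 c).
  { intros c Hc. unfold in01, Rmin, Rmax in *. destruct Rle_dec; lra. }
  destruct (MVT_gen (fun t => h (clamp t)) u v dh) as [c [Hc He]].
  - intros x Hx. apply deriv_interior.
    + unfold in01, Rmin, Rmax in *. destruct Rle_dec; lra.
    + apply Hd, Hin; lra.
  - intros x Hx. apply cpt_of_cont01. rewrite clamp_id by auto. eapply deriv_cont, Hd, Hin; auto.
  - exists c. split; [auto|split; auto]. rewrite !clamp_id in He by auto. auto.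
Qed.

Lemma MVI01 h dh M u v : (forall x, in01 x -> has_deriv01 h x (dh x)) ->
  (forall x, in01 x -> Rabs (dh x) <= M) -> in01 u -> in01 v -> Rabs (h v - h u) <= M * Rabs (v - u).
Proof.
  intros Hd HM Hu Hv. destruct (MVT01 h dh u v Hd Hu Hv) as [c [Hc [_ He]]].
  rewrite He, Rabs_mult. apply Rmult_le_compat_r; [apply Rabs_pos|auto].
Qed.

Lemma IVT01 h u v y : (forall x, in01 x -> cont01 h x) -> in01 u -> in01 v ->
  Rmin (h u) (h v) <= y <= Rmax (h u) (h v) -> exists c, in01 c /\ Rmin u v <= c <= Rmax u v /\ h c = y.
Proof.
  intros Hc Hu Hv Hy.
  destruct (IVT_gen (fun t => h (clamp t)) u v y (cont01_ext_all h Hc)) as [c [Hcb Hce]].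
  { rewrite !clamp_id by auto. auto. }
  assert (in01 c) by (apply (in01_between u v c Hu Hv Hcb)).
  exists c. split; [auto|split; [auto|]]. rewrite (clamp_id c H) in Hce. exact Hce.
Qed.
Lemma lub_fin E e B : E e -> (forall r, E r -> r <= B) ->
  exists l, Lub_Rbar E = Finite l /\ (forall r, E r -> r <= l) /\ l <= B.
Proof.
  intros He HB. destruct (Lub_Rbar_correct E) as [Hub Hl].
  destruct (Lub_Rbar E) as [l| |] eqn:HL.
  - exists l. split; auto. split.
    + intros r Hr. exact (Hub r Hr).
    + exact (Hl (Finite B) (fun r Hr => HB r Hr)).
  - exfalso. exact (Hl (Finite B) (fun r Hr => HB r Hr)).
  - exfalso. exact (Hub e He).
Qed.

Lemma real_lub_le E B : 0 <= B -> (forall r, E r -> r <= B) -> real (Lub_Rbar E) <= B.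
Proof.
  intros H0 HB. destruct (Lub_Rbar_correct E) as [Hub Hl].
  destruct (Lub_Rbar E) as [l| |] eqn:HL; simpl.
  - exact (Hl (Finite B) (fun r Hr => HB r Hr)).
  - exfalso. exact (Hl (Finite B) (fun r Hr => HB r Hr)).
  - auto.
Qed.

Lemma real_lub_ge E B r : E r -> (forall r, E r -> r <= B) -> r <= real (Lub_Rbar E).
Proof.
  intros Hr HB. destruct (lub_fin E r B Hr HB) as [l [-> [H _]]]. simpl. auto.
Qed.

Lemma real_lub_nonneg E : (forall r, E r -> 0 <= r) -> 0 <= real (Lub_Rbar E).
Proof.
  intros H. destruct (Lub_Rbar_correct E) as [Hub Hl].
  destruct (Lub_Rbar E) as [l| |] eqn:HL; simpl; try lra.
  destruct (classic (exists r, E r)) as [[r Hr]|Hn].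
  - specialize (Hub r Hr). specialize (H r Hr). simpl in Hub. lra.
  - exfalso. refine (Hl m_infty _). intros r Hr. exfalso; apply Hn; eauto.
Qed.

Lemma real_glb_le E e : E e -> (forall r, E r -> 0 <= r) -> 0 <= real (Glb_Rbar E) <= e.
Proof.
  intros He H0. destruct (Glb_Rbar_correct E) as [Hlb Hg].
  destruct (Glb_Rbar E) as [l| |] eqn:HL; simpl.
  - split.
    + exact (Hg (Finite 0) (fun r Hr => H0 r Hr)).
    + exact (Hlb e He).
  - exfalso. exact (Hlb e He).
  - exfalso. exact (Hg (Finite 0) (fun r Hr => H0 r Hr)).
Qed.

Lemma real_glb_ge E e c : E e -> (forall r, E r -> c <= r) -> c <= real (Glb_Rbar E).
Proof.
  intros He Hc. destruct (Glb_Rbar_correct E) as [Hlb Hg].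
  destruct (Glb_Rbar E) as [l| |] eqn:HL; simpl.
  - exact (Hg (Finite c) (fun r Hr => Hc r Hr)).
  - exfalso. exact (Hlb e He).
  - exfalso. exact (Hg (Finite c) (fun r Hr => Hc r Hr)).
Qed.

Lemma sup_le f B : 0 <= B -> (forall x, in01 x -> Rabs (f x) <= B) -> supnorm01 f <= B.
Proof. intros H0 H. apply real_lub_le; auto. intros r [x [Hx ->]]. auto. Qed.

Lemma sup_nonneg f : 0 <= supnorm01 f.
Proof. apply real_lub_nonneg. intros r [x [Hx ->]]. apply Rabs_pos. Qed.

Lemma sup_ge f x : isC1 f -> in01 x -> Rabs (f x) <= supnorm01 f.
Proof.
  intros Hf Hx. destruct (isC1_bounded f Hf) as [gf [B [HB [Hd Hb]]]].
  apply (real_lub_ge _ B). { exists x; auto. }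
  intros r [y [Hy ->]]. apply Hb; auto.
Qed.

Lemma dsup_le f gf B : 0 <= B -> (forall x, in01 x -> has_deriv01 f x (gf x)) ->
  (forall x, in01 x -> Rabs (gf x) <= B) -> dsupnorm01 f <= B.
Proof.
  intros H0 Hd HB. apply real_lub_le; auto. intros r [x [d [Hx [Hxd ->]]]].
  rewrite (deriv_unique f x d (gf x)); auto.
Qed.

Lemma dsup_nonneg f : 0 <= dsupnorm01 f.
Proof. apply real_lub_nonneg. intros r [x [d [Hx [Hxd ->]]]]. apply Rabs_pos. Qed.

Lemma dsup_ge f x d : isC1 f -> in01 x -> has_deriv01 f x d -> Rabs d <= dsupnorm01 f.
Proof.
  intros Hf Hx Hxd. destruct (isC1_bounded f Hf) as [gf [B [HB [Hd Hb]]]].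
  apply (real_lub_ge _ B). { exists x, d; auto. }
  intros r [y [e [Hy [Hye ->]]]]. rewrite (deriv_unique f y e (gf y)); auto. apply Hb; auto.
Qed.

Lemma c1_nonneg f : 0 <= c1norm f.
Proof. unfold c1norm. pose proof (sup_nonneg f); pose proof (dsup_nonneg f); lra. Qed.

Lemma c1_ge_val f x : isC1 f -> in01 x -> Rabs (f x) <= c1norm f.
Proof. intros. unfold c1norm. pose proof (sup_ge f x H H0); pose proof (dsup_nonneg f); lra. Qed.

Lemma c1_ge_der f x d : isC1 f -> in01 x -> has_deriv01 f x d -> Rabs d <= c1norm f.
Proof. intros. unfold c1norm. pose proof (dsup_ge f x d H H0 H1); pose proof (sup_nonneg f); lra. Qed.

Lemma c1_ge_dsup f : dsupnorm01 f <= c1norm f.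
Proof. unfold c1norm. pose proof (sup_nonneg f); lra. Qed.

Lemma c1_ge_sup f : supnorm01 f <= c1norm f.
Proof. unfold c1norm. pose proof (dsup_nonneg f); lra. Qed.

Lemma c1_ext f h : (forall x, in01 x -> f x = h x) -> c1norm f = c1norm h.
Proof.
  intros He. unfold c1norm, supnorm01, dsupnorm01.
  rewrite (Lub_Rbar_eqset (fun r => exists x, in01 x /\ r = Rabs (f x)) (fun r => exists x, in01 x /\ r = Rabs (h x))).
  rewrite (Lub_Rbar_eqset (fun r => exists x d, in01 x /\ has_deriv01 f x d /\ r = Rabs d)
    (fun r => exists x d, in01 x /\ has_deriv01 h x d /\ r = Rabs d)). reflexivity.
  - intros r; split; intros [x [d [Hx [Hd ->]]]]; exists x, d; (split; [auto|split; [|reflexivity]]).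
    + apply (deriv_ext f h x d Hx He Hd).
    + apply (deriv_ext h f x d Hx); auto. intros; symmetry; auto.
  - intros r; split; intros [x [Hx ->]]; exists x; split; auto; rewrite He; auto.
Qed.

Lemma c1_lin h a b p q : isC1 a -> isC1 b -> (forall x, in01 x -> h x = p * a x + q * b x) ->
  c1norm h <= Rabs p * c1norm a + Rabs q * c1norm b.
Proof.
  intros Ha Hb He.
  destruct (isC1_bounded a Ha) as [ga [Ba [_ [Hda _]]]].
  destruct (isC1_bounded b Hb) as [gb [Bb [_ [Hdb _]]]].
  pose proof (Rabs_pos p). pose proof (Rabs_pos q).
  assert (S : supnorm01 h <= Rabs p * supnorm01 a + Rabs q * supnorm01 b).
  { apply sup_le. { pose proof (sup_nonneg a); pose proof (sup_nonneg b); nra. }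
    intros x Hx. rewrite He by auto. eapply Rle_trans; [apply Rabs_triang|]. rewrite !Rabs_mult.
    pose proof (sup_ge a x Ha Hx); pose proof (sup_ge b x Hb Hx).
    apply Rplus_le_compat; apply Rmult_le_compat_l; auto. }
  assert (D : dsupnorm01 h <= Rabs p * dsupnorm01 a + Rabs q * dsupnorm01 b).
  { apply (dsup_le h (fun x => p * ga x + q * gb x)).
    { pose proof (dsup_nonneg a); pose proof (dsup_nonneg b); nra. }
    - intros x Hx. eapply deriv_ext; [auto| |apply deriv_lincomb; eauto]. intros; symmetry; auto.
    - intros x Hx. eapply Rle_trans; [apply Rabs_triang|]. rewrite !Rabs_mult.
      pose proof (dsup_ge a x _ Ha Hx (Hda x Hx)); pose proof (dsup_ge b x _ Hb Hx (Hdb x Hx)).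
      apply Rplus_le_compat; apply Rmult_le_compat_l; auto. }
  unfold c1norm. lra.
Qed.

Lemma c1_const c : c1norm (fun _ => c) <= Rabs c.
Proof.
  unfold c1norm. assert (supnorm01 (fun _ => c) <= Rabs c) by (apply sup_le; [apply Rabs_pos|intros; lra]).
  assert (dsupnorm01 (fun _ : R => c) <= 0).
  { apply (dsup_le _ (fun _ => 0)); [lra| |intros; rewrite Rabs_R0; lra].
    intros x Hx. apply deriv_of_is_derive. auto_derive; auto. }
  lra.
Qed.

Lemma op_le (L : op) B : 0 <= B -> (forall f, isC1 f -> c1norm f <= 1 -> c1norm (L f) <= B) -> opnorm L <= B.
Proof. intros H0 H. apply real_lub_le; auto. intros r [f [Hf [Hn ->]]]. auto. Qed.

Lemma op_ge (L : op) B f : (forall f, isC1 f -> c1norm f <= 1 -> c1norm (L f) <= B) ->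
  isC1 f -> c1norm f <= 1 -> c1norm (L f) <= opnorm L.
Proof.
  intros H Hf Hn. apply (real_lub_ge _ B). { exists f; auto. }
  intros r [g [Hg [Hgn ->]]]. auto.
Qed.

Lemma op_nonneg L : 0 <= opnorm L.
Proof. apply real_lub_nonneg. intros r [f [_ [_ ->]]]. apply c1_nonneg. Qed.

Definition zero_op : op := fun _ _ => 0.

Lemma c1_zero : c1norm (fun _ => 0) = 0.
Proof. pose proof (c1_const 0). rewrite Rabs_R0 in H. pose proof (c1_nonneg (fun _ => 0)). lra. Qed.

Lemma compact_zero : compact_op zero_op.
Proof.
  split; [split|].
  - intros; apply isC1_const.
  - intros. unfold zero_op. ring.
  - intros u Hu. exists (fun k => k), (fun _ => 0). split; [intros; lia|]. split; [apply isC1_const|].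
    unfold zero_op. eapply is_lim_seq_ext; [|apply is_lim_seq_const].
    intros n. simpl. rewrite <- c1_zero. apply c1_ext. intros; ring.
Qed.

Lemma ess_le A K : compact_op K -> ess_norm A <= opnorm (op_sub A K).
Proof.
  intros HK. apply (real_glb_le _ (opnorm (op_sub A K))).
  - exists K; auto.
  - intros r [K' [_ ->]]. apply op_nonneg.
Qed.

Lemma ess_nonneg A : 0 <= ess_norm A.
Proof.
  apply (real_glb_le _ (opnorm (op_sub A zero_op))).
  - exists zero_op; split; auto; apply compact_zero.
  - intros r [K' [_ ->]]. apply op_nonneg.
Qed.

Lemma ess_ge A c : (forall K, compact_op K -> c <= opnorm (op_sub A K)) -> c <= ess_norm A.
Proof.
  intros H. apply (real_glb_ge _ (opnorm (op_sub A zero_op))).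
  - exists zero_op; split; auto; apply compact_zero.
  - intros r [K' [HK ->]]. auto.
Qed.
Lemma s_ge (s : nat -> nat) : (forall k, (s k < s (S k))%nat) -> forall k, (k <= s k)%nat.
Proof. intros Hs k. induction k; [lia|]. specialize (Hs k). lia. Qed.

Lemma compact_bounded K : compact_op K -> exists M, 0 <= M /\
  forall f, isC1 f -> c1norm f <= 1 -> c1norm (K f) <= M.
Proof.
  intros HK. apply NNPP. intros Hn.
  assert (Hex : forall n : nat, exists f, isC1 f /\ c1norm f <= 1 /\ INR n < c1norm (K f)).
  { intros n. apply NNPP. intros Hn2. apply Hn. exists (INR n). split; [apply pos_INR|].
    intros f Hf Hf1. apply Rnot_lt_le. intros Hlt. apply Hn2. exists f. auto. }
  set (u := fun n => proj1_sig (constructive_indefinite_description _ (Hex n))).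
  assert (Hu : forall n, isC1 (u n) /\ c1norm (u n) <= 1 /\ INR n < c1norm (K (u n))).
  { intros n. exact (proj2_sig (constructive_indefinite_description _ (Hex n))). }
  destruct HK as [[HKC1 _] HK].
  destruct (HK u (fun k => conj (proj1 (Hu k)) (proj1 (proj2 (Hu k))))) as [s [g [Hs [Hg Hlim]]]].
  apply is_lim_seq_spec in Hlim. destruct (Hlim (mkposreal 1 Rlt_0_1)) as [N HN].
  destruct (INR_archimed 1 (1 + c1norm g)) as [m Hm]; [lra|].
  set (k := (N + m)%nat).
  specialize (HN k ltac:(unfold k; lia)). simpl in HN. rewrite Rminus_0_r in HN.
  pose proof (c1_nonneg (fun x => K (u (s k)) x - g x)). rewrite Rabs_pos_eq in HN by auto.
  assert (HKu := HKC1 _ (proj1 (Hu (s k)))).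
  assert (Hc : c1norm (K (u (s k))) <= Rabs 1 * c1norm (fun x => K (u (s k)) x - g x) + Rabs 1 * c1norm g).
  { apply c1_lin.
    - apply (isC1_ext (fun x => 1 * K (u (s k)) x + (-1) * g x)); [intros; ring|]. apply isC1_lin; auto.
    - auto.
    - intros; ring. }
  rewrite Rabs_R1 in Hc. destruct (Hu (s k)) as [_ [_ Hgt]].
  assert (INR m <= INR (s k)) by (apply le_INR; pose proof (s_ge s Hs k); unfold k in *; lia).
  lra.
Qed.

Fixpoint subseq (pick : nat -> nat -> nat) (k : nat) : nat :=
  match k with O => pick O O | S k' => pick k (S (subseq pick k')) end.

Lemma BW01 (u : nat -> R) : (forall k, Rabs (u k) <= 1) -> exists s l, (forall k, (s k < s (S k))%nat) /\
  forall eps, 0 < eps -> exists N, forall k, (N <= k)%nat -> Rabs (u (s k) - l) < eps.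
Proof.
  intros Hu. destruct (Bolzano_Weierstrass u (fun c => -1 <= c <= 1) (compact_P3 (-1) 1)) as [l Hl].
  { intros n. specialize (Hu n). rabs; lra. }
  assert (Hstep : forall k N : nat, exists p, (N <= p)%nat /\ Rabs (u p - l) < / INR (S k)).
  { intros k N. assert (Hp : 0 < / INR (S k)) by (apply Rinv_0_lt_compat, lt_0_INR; lia).
    destruct (Hl (fun y => Rabs (y - l) < / INR (S k)) N) as [p [Hp1 Hp2]].
    - exists (mkposreal _ Hp). intros y Hy. exact Hy.
    - exists p; auto. }
  set (pick := fun k N => proj1_sig (constructive_indefinite_description _ (Hstep k N))).
  assert (Hpick : forall k N, (N <= pick k N)%nat /\ Rabs (u (pick k N) - l) < / INR (S k)).
  { intros k N. exact (proj2_sig (constructive_indefinite_description _ (Hstep k N))). }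
  exists (subseq pick), l. split.
  - intros k. simpl. destruct (Hpick (S k) (S (subseq pick k))). lia.
  - intros eps Heps. destruct (archimed_cor1 eps Heps) as [N [HN HN0]]. exists N. intros k Hk.
    assert (Hk' : Rabs (u (subseq pick k) - l) < / INR (S k)) by (destruct k; simpl; apply Hpick).
    assert (/ INR (S k) <= / INR N).
    { apply Rinv_le_contravar; [apply lt_0_INR; lia| apply le_INR; lia]. }
    lra.
Qed.

Lemma compact_rank1 p : in01 p -> compact_op (fun f (_ : R) => f p).
Proof.
  intros Hp. split; [split|].
  - intros; apply isC1_const.
  - intros; reflexivity.
  - intros u Hu. destruct (BW01 (fun k => u k p)) as [s [l [Hs Hl]]].
    { intros k. destruct (Hu k) as [H1 H2]. pose proof (c1_ge_val (u k) p H1 Hp). lra. }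
    exists s, (fun _ => l). split; auto. split; [apply isC1_const|].
    apply is_lim_seq_spec. intros eps. destruct (Hl eps (cond_pos eps)) as [N HN]. exists N. intros k Hk.
    specialize (HN k Hk). rewrite Rminus_0_r.
    pose proof (c1_const (u (s k) p - l)). pose proof (c1_nonneg (fun _ => u (s k) p - l)).
    rewrite Rabs_pos_eq by auto. lra.
Qed.

Lemma iter_swap (phi : R -> R) n x : Nat.iter n phi (phi x) = phi (Nat.iter n phi x).
Proof. induction n; simpl; auto. rewrite IHn. reflexivity. Qed.

Lemma op_pow_pt phi n f x : op_pow (comp_op phi) n f x = f (Nat.iter n phi x).
Proof.
  unfold op_pow. revert f x. induction n; intros f x; simpl; auto.
  unfold comp_op at 1. rewrite IHn. rewrite iter_swap. reflexivity.
Qed.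

Lemma op_pow_comp phi n : op_pow (comp_op phi) n = comp_op (Nat.iter n phi).
Proof.
  apply functional_extensionality; intros f. apply functional_extensionality; intros x.
  rewrite op_pow_pt. reflexivity.
Qed.
Lemma between_dist u v c : Rmin u v <= c <= Rmax u v -> Rabs (c - u) <= Rabs (v - u).
Proof. unfold Rmin, Rmax; destruct Rle_dec; intros; rabs; lra. Qed.

Lemma pow2_ge n : INR n <= 2 ^ n.
Proof.
  induction n; [simpl; lra|]. rewrite S_INR. simpl. pose proof (pow_le 2 n ltac:(lra)).
  assert (1 <= 2 ^ n) by (apply pow_R1_Rle; lra). lra.
Qed.

Lemma cos_sigma s t : s = 1 \/ s = -1 -> cos (s * t) = cos t.
Proof.
  intros [-> | ->]. - f_equal; ring. - replace (-1 * t) with (- t) by ring. apply cos_neg.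
Qed.

Lemma cos_pow2PI m : cos (2 ^ (S m) * PI) = 1.
Proof.
  replace (2 ^ (S m) * PI) with (0 + 2 * INR (2 ^ m) * PI).
  - rewrite cos_period. apply cos_0.
  - rewrite pow_INR, <- tech_pow_Rmult. replace (INR 2) with 2 by (simpl; ring). ring.
Qed.

Definition fk (z : R) (k : nat) (y : R) : R := sin (2 ^ k * (y - z)) / (4 * 2 ^ k).
Definition dfk (z : R) (k : nat) (y : R) : R := cos (2 ^ k * (y - z)) / 4.

Lemma fk_derive z k y : is_derive (fk z k) y (dfk z k y).
Proof.
  unfold fk, dfk. auto_derive; auto. unfold Rminus. field. apply pow_nonzero. lra.
Qed.

Lemma dfk_cont z k y : continuity_pt (dfk z k) y.
Proof.
  apply continuity_pt_filterlim. apply (ex_derive_continuous (dfk z k)). unfold dfk. auto_derive. auto.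
Qed.

Lemma fk_C1 z k : isC1 (fk z k).
Proof. apply (isC1_global _ (dfk z k)); intros; [apply fk_derive|apply dfk_cont]. Qed.

Lemma fk_norm z k : c1norm (fk z k) <= 1 / 2.
Proof.
  assert (H2 : 1 <= 2 ^ k) by (apply pow_R1_Rle; lra).
  unfold c1norm. assert (supnorm01 (fk z k) <= 1/4).
  { apply sup_le; [lra|]. intros x _. unfold fk. rewrite Rabs_div by lra.
    rewrite (Rabs_pos_eq (4 * 2 ^ k)) by lra.
    pose proof (SIN_bound (2 ^ k * (x - z))).
    assert (Rabs (sin (2 ^ k * (x - z))) <= 1) by (rabs; lra).
    apply (Rmult_le_reg_r (4 * 2 ^ k)); [lra|]. unfold Rdiv. rewrite Rmult_assoc, Rinv_l by lra. nra. }
  assert (dsupnorm01 (fk z k) <= 1/4).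
  { apply (dsup_le _ (dfk z k)); [lra| |].
    - intros; apply deriv_of_is_derive, fk_derive.
    - intros x _. unfold dfk. pose proof (COS_bound (2 ^ k * (x - z))). rabs; lra. }
  lra.
Qed.

Lemma comp_norm psi Dp Bp f : (forall x, in01 x -> in01 (psi x)) ->
  (forall x, in01 x -> has_deriv01 psi x (Dp x)) -> 0 <= Bp -> (forall x, in01 x -> Rabs (Dp x) <= Bp) ->
  isC1 f -> c1norm f <= 1 -> c1norm (fun x => f (psi x)) <= 1 + Bp.
Proof.
  intros Hm Hd HBp HB Hf Hf1. destruct (isC1_bounded f Hf) as [gf [Bf [_ [Hdf _]]]].
  unfold c1norm. assert (supnorm01 (fun x => f (psi x)) <= 1).
  { apply sup_le; [lra|]. intros x Hx. pose proof (c1_ge_val f (psi x) Hf (Hm x Hx)). lra. }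
  assert (dsupnorm01 (fun x => f (psi x)) <= Bp).
  { apply (dsup_le _ (fun x => gf (psi x) * Dp x)); auto.
    - intros x Hx. apply deriv_chain; auto.
    - intros x Hx. rewrite Rabs_mult. pose proof (c1_ge_der f (psi x) _ Hf (Hm x Hx) (Hdf _ (Hm x Hx))).
      pose proof (HB x Hx). pose proof (Rabs_pos (gf (psi x))). pose proof (Rabs_pos (Dp x)). nra. }
  lra.
Qed.

Lemma ess_upper psi Dp B : (forall x, in01 x -> in01 (psi x)) ->
  (forall x, in01 x -> has_deriv01 psi x (Dp x)) -> 0 <= B -> (forall x, in01 x -> Rabs (Dp x) <= B) ->
  ess_norm (comp_op psi) <= 2 * B.
Proof.
  intros Hm Hd HB0 HB.
  assert (H0 : in01 0) by (unfold in01; lra).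
  eapply Rle_trans; [apply (ess_le _ (fun f _ => f (psi 0))); apply compact_rank1; auto|].
  apply op_le; [lra|]. intros f Hf Hf1.
  destruct (isC1_bounded f Hf) as [gf [Bf [_ [Hdf _]]]].
  assert (Hdf1 : dsupnorm01 f <= 1) by (pose proof (c1_ge_dsup f); lra).
  assert (Hbd : forall x, in01 x -> Rabs (gf (psi x) * Dp x) <= B).
  { intros x Hx. rewrite Rabs_mult. pose proof (dsup_ge f (psi x) _ Hf (Hm x Hx) (Hdf _ (Hm x Hx))).
    pose proof (HB x Hx). pose proof (Rabs_pos (gf (psi x))). pose proof (Rabs_pos (Dp x)). nra. }
  unfold c1norm, op_sub, comp_op.
  assert (supnorm01 (fun x => f (psi x) - f (psi 0)) <= B).
  { apply sup_le; auto. intros x Hx.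
    pose proof (MVI01 (fun y => f (psi y)) (fun y => gf (psi y) * Dp y) B 0 x) as HM.
    assert (Rabs (x - 0) <= 1) by (unfold in01 in Hx; rabs; lra).
    assert (Rabs (f (psi x) - f (psi 0)) <= B * Rabs (x - 0)).
    { apply HM; auto. intros y Hy. apply deriv_chain; auto. }
    nra. }
  assert (dsupnorm01 (fun x => f (psi x) - f (psi 0)) <= B).
  { apply (dsup_le _ (fun x => 1 * (gf (psi x) * Dp x) + (-1) * 0)); auto.
    - intros x Hx. apply (deriv_ext (fun y => 1 * f (psi y) + (-1) * f (psi 0))); auto; [intros; ring|].
      apply deriv_lincomb.
      + apply deriv_chain; auto.
      + apply deriv_of_is_derive. auto_derive; auto.
    - intros x Hx. replace (1 * (gf (psi x) * Dp x) + -1 * 0) with (gf (psi x) * Dp x) by ring. auto. }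
  lra.
Qed.
Lemma ess_lower psi Dp xi : (forall x, in01 x -> in01 (psi x)) ->
  (forall x, in01 x -> has_deriv01 psi x (Dp x)) -> (forall x, in01 x -> cont01 Dp x) ->
  in01 xi -> Dp xi <> 0 -> Rabs (Dp xi) / 8 <= ess_norm (comp_op psi).
Proof.
  intros Hm Hd Hc Hxi Hnz.
  set (d := Rabs (Dp xi)). assert (Hdpos : 0 < d) by (apply Rabs_pos_lt; auto).
  destruct (Hc xi Hxi (d/2)) as [eta [Heta Hnear]]; [lra|].
  assert (Hbig : forall x, in01 x -> Rabs (x - xi) < eta -> d/2 < Rabs (Dp x)).
  { intros x Hx Hxe. specialize (Hnear x Hx Hxe). unfold d in *. rabs; lra. }
  destruct (exists_near xi eta Hxi Heta) as [x1 [Hx1 [Hx1ne Hx1d]]].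
  assert (Hseg : forall c, Rmin xi x1 <= c <= Rmax xi x1 -> in01 c /\ d/2 < Rabs (Dp c)).
  { intros c Hcb. assert (in01 c) by (apply (in01_between xi x1 c); auto). split; auto.
    apply Hbig; auto. pose proof (between_dist xi x1 c Hcb). lra. }
  assert (HL : 0 < Rabs (psi x1 - psi xi)).
  { destruct (MVT01 psi Dp xi x1 Hd Hxi Hx1) as [c [Hcin [Hcb He]]]. rewrite He, Rabs_mult.
    apply Rmult_lt_0_compat.
    - destruct (Hseg c Hcb). lra.
    - apply Rabs_pos_lt; lra. }
  set (sg := if Rle_dec (psi xi) (psi x1) then 1 else -1).
  assert (Hsg : sg = 1 \/ sg = -1) by (unfold sg; destruct Rle_dec; auto).
  assert (Hpre : forall t, 0 <= t <= Rabs (psi x1 - psi xi) ->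
    exists x, in01 x /\ psi x = psi xi + sg * t /\ d/2 < Rabs (Dp x)).
  { intros t Ht. destruct (IVT01 psi xi x1 (psi xi + sg * t)) as [c [Hcin [Hcb Hce]]]; auto.
    - intros; eapply deriv_cont; eauto.
    - unfold sg. unfold Rmin, Rmax. destruct (Rle_dec (psi xi) (psi x1)); rabs; lra.
    - exists c. split; auto. split; auto. apply Hseg; auto. }
  destruct (INR_archimed (Rabs (psi x1 - psi xi)) PI) as [J HJ]; [lra|].
  assert (HJ2 : forall j, (J <= j)%nat -> 0 < PI / 2 ^ j < Rabs (psi x1 - psi xi)).
  { intros j Hj. pose proof (pow2_ge J). assert (2 ^ J <= 2 ^ j) by (apply Rle_pow; [lra|auto]).
    pose proof PI_RGT_0. assert (Hp : 0 < 2 ^ j) by (apply pow_lt; lra). split.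
    - apply Rdiv_lt_0_compat; lra.
    - apply (Rmult_lt_reg_r (2 ^ j)); auto. unfold Rdiv. rewrite Rmult_assoc, Rinv_l by lra.
      assert (INR J <= 2 ^ j) by lra. nra. }
  apply ess_ge. intros K HK.
  destruct (compact_bounded K HK) as [M [HM0 HMb]].
  destruct (cont_bounded Dp Hc) as [Bp [HBp0 HBp]].
  destruct HK as [[HKC1 HKlin] HKc].
  assert (Hpsi : isC1 psi) by (exists Dp; split; auto).
  assert (Hopb : forall f, isC1 f -> c1norm f <= 1 -> c1norm (op_sub (comp_op psi) K f) <= (1 + Bp) + M).
  { intros f Hf Hf1.
    eapply Rle_trans. apply (c1_lin _ (fun x => f (psi x)) (K f) 1 (-1)).
    - apply isC1_comp; auto.
    - apply HKC1; auto.
    - intros; unfold op_sub, comp_op; ring.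
    - rewrite Rabs_R1, Rabs_m1. pose proof (comp_norm psi Dp Bp f Hm Hd HBp0 HBp Hf Hf1).
      pose proof (HMb f Hf Hf1). lra. }
  assert (Hfk : forall k, isC1 (fk (psi xi) k) /\ c1norm (fk (psi xi) k) <= 1).
  { intros k. split; [apply fk_C1|]. pose proof (fk_norm (psi xi) k); lra. }
  destruct (HKc (fk (psi xi)) Hfk)
    as [s [g [Hs [Hg Hlim]]]].
  apply is_lim_seq_spec in Hlim. assert (Hd16 : 0 < d/16) by lra.
  destruct (Hlim (mkposreal _ Hd16)) as [N HN]. simpl in HN.
  pose proof (HN (N + J)%nat ltac:(lia)) as HNj. pose proof (HN (S (N + J))%nat ltac:(lia)) as HNk.
  assert (Hja : (J <= s (N + J))%nat) by (pose proof (s_ge s Hs (N + J)%nat); lia).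
  assert (Hjk : (s (N + J) < s (S (N + J)))%nat) by (apply Hs).
  set (j := s (N + J)%nat) in *. set (k := s (S (N + J))%nat) in *.
  rewrite Rminus_0_r in HNj, HNk.
  destruct (HJ2 j Hja) as [Ht0 HtL].
  destruct (Hpre (PI / 2 ^ j)) as [xj [Hxj [Hpsij Hbigj]]]; [lra|].
  set (v := fun y => 1 * fk (psi xi) k y + (-1) * fk (psi xi) j y).
  assert (Hv : isC1 v) by (apply isC1_lin; apply fk_C1).
  assert (Hv1 : c1norm v <= 1).
  { eapply Rle_trans; [apply (c1_lin v (fk (psi xi) k) (fk (psi xi) j) 1 (-1)); try apply fk_C1; intros; reflexivity|].
    rewrite Rabs_R1, Rabs_m1. pose proof (fk_norm (psi xi) k). pose proof (fk_norm (psi xi) j). lra. }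
  eapply Rle_trans; [|apply (op_ge _ _ v Hopb Hv Hv1)].
  destruct (isC1_bounded (K (fk (psi xi) k)) (HKC1 _ (fk_C1 _ k))) as [Gk [_ [_ [HGk _]]]].
  destruct (isC1_bounded (K (fk (psi xi) j)) (HKC1 _ (fk_C1 _ j))) as [Gj [_ [_ [HGj _]]]].
  destruct (isC1_bounded g Hg) as [gg [_ [_ [Hgg _]]]].
  assert (Ediff : forall m (Gm : R -> R), (forall x, in01 x -> has_deriv01 (K (fk (psi xi) m)) x (Gm x)) ->
     Rabs (1 * Gm xj + -1 * gg xj) <= c1norm (fun x => K (fk (psi xi) m) x - g x)).
  { intros m Gm HGm. apply (c1_ge_der _ xj); auto.
    - apply (isC1_ext (fun x => 1 * K (fk (psi xi) m) x + (-1) * g x)); [intros; ring|].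
      apply isC1_lin; auto. apply HKC1, fk_C1.
    - apply (deriv_ext (fun x => 1 * K (fk (psi xi) m) x + (-1) * g x)); auto; [intros; ring|].
      apply deriv_lincomb; auto. }
  pose proof (Ediff k Gk HGk) as Ek. pose proof (Ediff j Gj HGj) as Ej.
  assert (Ck : cos (2 ^ k * (psi xj - psi xi)) = 1).
  { rewrite Hpsij. replace (2 ^ k * (psi xi + sg * (PI / 2 ^ j) - psi xi)) with (sg * (2 ^ (S (k - j - 1)) * PI)).
    - rewrite cos_sigma by auto. apply cos_pow2PI.
    - replace k with (S (k - j - 1) + j)%nat at 2 by lia. rewrite pow_add. field. apply pow_nonzero; lra. }
  assert (Cj : cos (2 ^ j * (psi xj - psi xi)) = -1).
  { rewrite Hpsij. replace (2 ^ j * (psi xi + sg * (PI / 2 ^ j) - psi xi)) with (sg * PI).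
    - rewrite cos_sigma by auto. apply cos_PI.
    - field. apply pow_nonzero; lra. }
  set (DW := 1 * ((1 * dfk (psi xi) k (psi xj) + -1 * dfk (psi xi) j (psi xj)) * Dp xj)
             + (-1) * (1 * Gk xj + -1 * Gj xj)).
  assert (HW : has_deriv01 (op_sub (comp_op psi) K v) xj DW).
  { apply (deriv_ext (fun x => 1 * v (psi x) + (-1) * (1 * K (fk (psi xi) k) x + (-1) * K (fk (psi xi) j) x))); auto.
    - intros y Hy. unfold op_sub, comp_op, v. rewrite HKlin by (auto; apply fk_C1). ring.
    - apply deriv_lincomb.
      + apply deriv_chain; auto. unfold v. apply deriv_lincomb; apply deriv_of_is_derive, fk_derive.
      + apply deriv_lincomb; auto. }
  assert (HWC : isC1 (op_sub (comp_op psi) K v)).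
  { apply (isC1_ext (fun x => 1 * v (psi x) + (-1) * K v x)); [intros; unfold op_sub, comp_op; ring|].
    apply isC1_lin; [apply isC1_comp; auto|apply HKC1; auto]. }
  eapply Rle_trans; [|apply (c1_ge_der _ xj DW HWC Hxj HW)].
  unfold DW, dfk. rewrite Ck, Cj.
  assert (Ek2 : Rabs (1 * Gk xj + -1 * gg xj) < d / 16).
  { eapply Rle_lt_trans; [exact Ek|]. eapply Rle_lt_trans; [apply Rle_abs|exact HNk]. }
  assert (Ej2 : Rabs (1 * Gj xj + -1 * gg xj) < d / 16).
  { eapply Rle_lt_trans; [exact Ej|]. eapply Rle_lt_trans; [apply Rle_abs|exact HNj]. }
  clear -Ek2 Ej2 Hbigj Hdpos. fold d. rabs; lra.
Qed.
Lemma nroot_nonneg x n : 0 <= nroot x n.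
Proof. unfold nroot. destruct Rlt_dec; [unfold Rpower; apply Rlt_le, exp_pos|lra]. Qed.


Lemma exp_le_mono a b : a <= b -> exp a <= exp b.
Proof. intros H. destruct (Req_dec a b) as [->|Hne]; [lra|]. apply Rlt_le, exp_increasing. lra. Qed.

Lemma Rpower_le_mono a b c : 0 <= c -> 0 < a <= b -> Rpower a c <= Rpower b c.
Proof. apply Rle_Rpower_l. Qed.

Lemma nroot_mono a b n : (1 <= n)%nat -> 0 <= a <= b -> 0 < b -> nroot a n <= nroot b n.
Proof.
  intros Hn Hab Hb. unfold nroot. destruct (Rlt_dec 0 b); [|lra].
  destruct (Rlt_dec 0 a).
  - apply Rle_Rpower_l; [apply Rlt_le, Rinv_0_lt_compat, lt_0_INR; lia|lra].
  - unfold Rpower; apply Rlt_le, exp_pos.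
Qed.

Lemma Rpower_pow_inv e n : 0 < e -> (1 <= n)%nat -> Rpower (e ^ n) (/ INR n) = e.
Proof.
  intros He Hn. rewrite <- Rpower_pow by auto. rewrite Rpower_mult.
  rewrite Rinv_r by (apply not_0_INR; lia). apply Rpower_1; auto.
Qed.

Lemma nroot_prod C e n : 0 < C -> 0 < e -> (1 <= n)%nat -> nroot (C * e ^ n) n = Rpower C (/ INR n) * e.
Proof.
  intros HC He Hn. unfold nroot. destruct Rlt_dec as [H|H].
  - rewrite <- Rpower_mult_distr by (auto; apply pow_lt; auto). rewrite Rpower_pow_inv; auto.
  - exfalso. apply H. apply Rmult_lt_0_compat; auto. apply pow_lt; auto.
Qed.

Lemma Rpower_le2 C n : 0 < C -> C <= 2 ^ n -> (1 <= n)%nat -> Rpower C (/ INR n) <= 2.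
Proof.
  intros HC HCn Hn. rewrite <- (Rpower_pow_inv 2 n) by (auto; lra).
  apply Rle_Rpower_l; [apply Rlt_le, Rinv_0_lt_compat, lt_0_INR; lia|lra].
Qed.

Lemma Rpower_ge8 n : (1 <= n)%nat -> / 8 <= Rpower (/ 8) (/ INR n).
Proof.
  intros Hn. unfold Rpower. rewrite <- (exp_ln (/ 8)) at 1 by lra.
  apply exp_le_mono.
  assert (ln (/ 8) < 0) by (rewrite <- ln_1; apply ln_increasing; lra).
  assert (0 < / INR n <= 1).
  { split; [apply Rinv_0_lt_compat, lt_0_INR; lia|].
    rewrite <- Rinv_1. apply Rinv_le_contravar; [lra|]. replace 1 with (INR 1) by reflexivity. apply le_INR; auto. }
  nra.
Qed.

Lemma riesz_from_bound (e : nat -> R) : (forall n, 0 <= e n) ->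
  (forall eps, 0 < eps -> exists C N, 0 < C /\ forall n, (N <= n)%nat -> e n <= C * eps ^ n) ->
  is_lim_seq (fun n => nroot (e n) n) 0.
Proof.
  intros H0 H. apply is_lim_seq_spec. intros eps.
  destruct (H (eps / 4)) as [C [N [HC HN]]]; [pose proof (cond_pos eps); lra|].
  destruct (INR_archimed 1 C) as [N2 HN2]; [lra|].
  exists (N + N2 + 1)%nat. intros n Hn. rewrite Rminus_0_r.
  pose proof (cond_pos eps) as Heps.
  rewrite Rabs_pos_eq by apply nroot_nonneg.
  assert (Hn1 : (1 <= n)%nat) by lia.
  eapply Rle_lt_trans; [apply (nroot_mono _ (C * (eps / 4) ^ n)); auto|].
  - split; auto. apply HN; lia.
  - apply Rmult_lt_0_compat; auto. apply pow_lt; lra.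
  - rewrite nroot_prod by (auto; lra).
    assert (Rpower C (/ INR n) <= 2).
    { apply Rpower_le2; auto. pose proof (pow2_ge n). assert (INR N2 <= INR n) by (apply le_INR; lia). lra. }
    assert (0 < eps / 4) by lra. nra.
Qed.

Lemma riesz_lower (e : nat -> R) c : 0 < c -> (forall n, (1 <= n)%nat -> c ^ n / 8 <= e n) ->
  ~ is_lim_seq (fun n => nroot (e n) n) 0.
Proof.
  intros Hc H Hlim. apply is_lim_seq_spec in Hlim.
  assert (Hc8 : 0 < c / 8) by lra.
  destruct (Hlim (mkposreal _ Hc8)) as [N HN]. simpl in HN.
  specialize (HN (N + 1)%nat ltac:(lia)). rewrite Rminus_0_r, Rabs_pos_eq in HN by apply nroot_nonneg.
  set (n := (N + 1)%nat) in *. assert (Hn : (1 <= n)%nat) by (unfold n; lia).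
  assert (nroot (/ 8 * c ^ n) n <= nroot (e n) n).
  { apply nroot_mono; auto.
    - split. + apply Rmult_le_pos; [lra|apply pow_le; lra]. + specialize (H n Hn). lra.
    - specialize (H n Hn). assert (0 < c ^ n) by (apply pow_lt; lra). lra. }
  rewrite nroot_prod in H0 by (auto; lra).
  pose proof (Rpower_ge8 n Hn). nra.
Qed.
Lemma cont01_id x : cont01 (fun y => y) x.
Proof. intros eps Heps. exists eps. split; auto. Qed.

Fixpoint Dn (phi g : R -> R) (n : nat) (x : R) : R :=
  match n with O => 1 | S m => g (Nat.iter m phi x) * Dn phi g m x end.

Section Dyn.
Variable phi g : R -> R.
Hypothesis Hmap : forall x, in01 x -> in01 (phi x).
Hypothesis Hd : forall x, in01 x -> has_deriv01 phi x (g x).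
Hypothesis Hc : forall x, in01 x -> cont01 g x.

Lemma iter_in n x : in01 x -> in01 (Nat.iter n phi x).
Proof. induction n; simpl; auto. Qed.

Lemma iter_deriv n x : in01 x -> has_deriv01 (Nat.iter n phi) x (Dn phi g n x).
Proof.
  revert x. induction n; intros x Hx.
  - apply (deriv_ext (fun y => y)); auto. apply deriv_of_is_derive. auto_derive; auto.
  - apply (deriv_ext (fun y => phi (Nat.iter n phi y))); auto. simpl.
    apply deriv_chain; auto. { intros; apply iter_in; auto. } apply Hd, iter_in; auto.
Qed.

Lemma iter_cont n x : in01 x -> cont01 (Nat.iter n phi) x.
Proof. intros Hx. eapply deriv_cont, iter_deriv; auto. Qed.

Lemma Dn_cont n x : in01 x -> cont01 (Dn phi g n) x.
Proof.
  revert x. induction n; intros x Hx.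
  - apply cont01_const.
  - apply (cont01_ext (fun t => g (Nat.iter n phi t) * Dn phi g n t)); auto.
    apply cont01_mult; auto. apply cont01_comp; auto.
    + intros; apply iter_in; auto.
    + apply iter_cont; auto.
    + apply Hc, iter_in; auto.
Qed.

Lemma E_upper n B : 0 <= B -> (forall x, in01 x -> Rabs (Dn phi g n x) <= B) ->
  ess_norm (op_pow (comp_op phi) n) <= 2 * B.
Proof.
  intros HB H. rewrite op_pow_comp. apply (ess_upper _ (Dn phi g n)); auto.
  - intros; apply iter_in; auto.
  - intros; apply iter_deriv; auto.
Qed.

Lemma E_lower n xi : in01 xi -> Dn phi g n xi <> 0 ->
  Rabs (Dn phi g n xi) / 8 <= ess_norm (op_pow (comp_op phi) n).
Proof.
  intros Hxi Hnz. rewrite op_pow_comp. apply ess_lower; auto.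
  - intros; apply iter_in; auto.
  - intros; apply iter_deriv; auto.
  - intros; apply Dn_cont; auto.
Qed.

Definition inter (y : R) := forall n : nat, exists x, in01 x /\ y = Nat.iter n phi x.

Lemma nested n m y : (n <= m)%nat -> (exists x, in01 x /\ y = Nat.iter m phi x) ->
  exists x, in01 x /\ y = Nat.iter n phi x.
Proof.
  intros Hnm [x [Hx ->]]. exists (Nat.iter (m - n) phi x). split; [apply iter_in; auto|].
  rewrite <- Nat.iter_add. f_equal. lia.
Qed.

Lemma iter_fix x n : phi x = x -> Nat.iter n phi x = x.
Proof. intros H. induction n; simpl; auto. rewrite IHn; auto. Qed.

Lemma Dn_fix x n : phi x = x -> Dn phi g n x = g x ^ n.
Proof. intros H. induction n; simpl; auto. rewrite IHn, iter_fix; auto. Qed.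

Lemma UC x0 : (forall y, inter y <-> y = x0) -> forall eta, 0 < eta ->
  exists N, forall m x, (N <= m)%nat -> in01 x -> Rabs (Nat.iter m phi x - x0) < eta.
Proof.
  intros Hint eta Heta. apply NNPP. intros Hn.
  assert (F : forall n, (exists x, in01 x /\ x0 + eta/2 = Nat.iter n phi x) \/
                        (exists x, in01 x /\ x0 - eta/2 = Nat.iter n phi x)).
  { intros n. apply NNPP. intros Hno. apply Hn. exists n. intros m x Hm Hx.
    apply Rnot_le_lt. intros Hge.
    assert (Hx0 : inter x0) by (apply Hint; auto).
    destruct (Hx0 m) as [x' [Hx' Hx'e]].
    assert (Hc' : forall y, in01 y -> cont01 (Nat.iter m phi) y) by (intros; apply iter_cont; auto).
    destruct (Rle_dec (x0 + eta) (Nat.iter m phi x)) as [Hup|Hdown].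
    - destruct (IVT01 (Nat.iter m phi) x' x (x0 + eta / 2) Hc' Hx' Hx) as [c [Hcin [_ Hce]]].
      { rewrite <- Hx'e. unfold Rmin, Rmax. destruct Rle_dec; lra. }
      apply Hno. left. apply (nested n m); auto. exists c; auto.
    - assert (Nat.iter m phi x <= x0 - eta) by (rabs; lra).
      destruct (IVT01 (Nat.iter m phi) x' x (x0 - eta / 2) Hc' Hx' Hx) as [c [Hcin [_ Hce]]].
      { rewrite <- Hx'e. unfold Rmin, Rmax. destruct Rle_dec; lra. }
      apply Hno. right. apply (nested n m); auto. exists c; auto. }
  destruct (classic (forall n, exists x, in01 x /\ x0 + eta/2 = Nat.iter n phi x)) as [Hall|Hnall].
  - assert (x0 + eta / 2 = x0) by (apply Hint; exact Hall). lra.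
  - apply not_all_ex_not in Hnall. destruct Hnall as [n0 Hn0].
    assert (Hall : inter (x0 - eta / 2)).
    { intros n. destruct (F (n + n0)%nat) as [Hp|Hm].
      - exfalso. apply Hn0. apply (nested n0 (n + n0)); auto. lia.
      - apply (nested n (n + n0)); auto. lia. }
    assert (x0 - eta / 2 = x0) by (apply Hint; exact Hall). lra.
Qed.

Lemma Dn_bound_all G n x : 0 <= G -> (forall y, in01 y -> Rabs (g y) <= G) -> in01 x -> Rabs (Dn phi g n x) <= G ^ n.
Proof.
  intros HG H Hx. induction n; simpl.
  - rewrite Rabs_R1; lra.
  - rewrite Rabs_mult. apply Rmult_le_compat; auto using Rabs_pos. apply H, iter_in; auto.
Qed.

Lemma Dn_bound_tail G N e m x : 0 <= G -> 0 <= e -> (forall y, in01 y -> Rabs (g y) <= G) ->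
  (forall k y, (N <= k)%nat -> in01 y -> Rabs (g (Nat.iter k phi y)) <= e) -> in01 x ->
  Rabs (Dn phi g (N + m) x) <= G ^ N * e ^ m.
Proof.
  intros HG He H Ht Hx. induction m.
  - rewrite Nat.add_0_r, pow_O, Rmult_1_r. apply Dn_bound_all; auto.
  - rewrite Nat.add_succ_r. simpl. rewrite Rabs_mult.
    replace (G ^ N * (e * e ^ m)) with (e * (G ^ N * e ^ m)) by ring.
    apply Rmult_le_compat; auto using Rabs_pos. apply Ht; auto. lia.
Qed.

End Dyn.

Lemma pow_le_self c n : 0 <= c <= 1 -> (1 <= n)%nat -> c ^ n <= c.
Proof.
  intros Hc Hn. induction n; [lia|]. destruct n; simpl; [lra|].
  simpl in IHn. assert (c * (c * c ^ n) <= c * 1).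
  { apply Rmult_le_compat_l; [lra|]. assert (c * c ^ n <= c) by (apply IHn; lia). lra. }
  lra.
Qed.

Theorem theorem3p1 (phi : R -> R)
  (Hmap : forall x, in01 x -> in01 (phi x))
  (HC1 : isC1 phi) :
  Riesz (comp_op phi) <->
  exists x0, in01 x0 /\
    (forall y, (forall n : nat, exists x, in01 x /\ y = Nat.iter n phi x) <-> y = x0) /\
    has_deriv01 phi x0 0.
Proof.
  destruct HC1 as [g [Hd Hc]]. unfold Riesz. split.
  -
    intros HR. apply NNPP. intros Hn.
    destruct (IVT01 (fun x => 1 * phi x + (-1) * x) 0 1 0) as [xs [Hxs [_ Hxse]]].
    { intros x Hx. apply cont01_lin; auto. - eapply deriv_cont; eauto. - apply cont01_id. }
    { unfold in01; lra. } { unfold in01; lra. }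
    { pose proof (Hmap 0 ltac:(unfold in01; lra)). pose proof (Hmap 1 ltac:(unfold in01; lra)).
      unfold in01 in *. unfold Rmin, Rmax. destruct Rle_dec; lra. }
    assert (Hfix : phi xs = xs) by lra.
    assert (Hxs_int : forall n, exists x, in01 x /\ xs = Nat.iter n phi x).
    { intros n. exists xs. split; auto. rewrite iter_fix; auto. }
    assert (Hgood : exists c, 0 < c /\ forall n, (1 <= n)%nat -> exists xi, in01 xi /\ c ^ n <= Rabs (Dn phi g n xi)).
    { destruct (Req_dec (g xs) 0) as [Hg0|Hg0].
      -
        assert (Hy : exists y, y <> xs /\ forall n, exists x, in01 x /\ y = Nat.iter n phi x).
        { apply NNPP. intros Hno. apply Hn. exists xs. split; auto. split.
          - intros y. split.
            + intros Hyi. apply NNPP. intros Hne. apply Hno. exists y. auto.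
            + intros ->. auto.
          - rewrite <- Hg0. auto. }
        destruct Hy as [y [Hyne Hyi]].
        assert (Hyin : in01 y) by (destruct (Hyi O) as [x [Hx ->]]; auto).
        set (c := Rabs (y - xs) / 2).
        assert (Hcpos : 0 < c) by (unfold c; assert (0 < Rabs (y - xs)) by (apply Rabs_pos_lt; lra); lra).
        assert (Hc1 : c <= 1) by (unfold c; unfold in01 in *; rabs; lra).
        exists c. split; auto. intros n Hn1.
        apply NNPP. intros Hno.
        assert (Hb : forall x, in01 x -> Rabs (Dn phi g n x) <= c ^ n).
        { intros x Hx. apply Rnot_lt_le. intros Hlt. apply Hno. exists x. split; auto. lra. }
        destruct (Hyi n) as [u [Hu Hue]].
        pose proof (MVI01 (Nat.iter n phi) (Dn phi g n) (c ^ n) xs u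
          (fun x Hx => iter_deriv phi g Hmap Hd n x Hx) Hb Hxs Hu) as HM.
        rewrite <- Hue, iter_fix in HM by auto.
        assert (Rabs (u - xs) <= 1) by (unfold in01 in *; rabs; lra).
        pose proof (pow_le_self c n ltac:(lra) Hn1).
        assert (0 <= c ^ n) by (apply pow_le; lra).
        assert (Rabs (y - xs) <= c) by nra.
        unfold c in *. lra.
      - exists (Rabs (g xs)). split; [apply Rabs_pos_lt; auto|].
        intros n _. exists xs. split; auto. rewrite Dn_fix by auto. rewrite RPow_abs. lra. }
    destruct Hgood as [c [Hcpos Hgood]].
    apply (riesz_lower (fun n => ess_norm (op_pow (comp_op phi) n)) c Hcpos); auto.
    intros n Hn1. destruct (Hgood n Hn1) as [xi [Hxi Hxin]].
    assert (Hcn : 0 < c ^ n) by (apply pow_lt; auto).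
    eapply Rle_trans; [|apply (E_lower phi g Hmap Hd Hc n xi Hxi)].
    + lra.
    + intros H0. rewrite H0, Rabs_R0 in Hxin. lra.
  -
    intros [x0 [Hx0 [Hint Hder]]].
    assert (Hg0 : g x0 = 0) by (eapply deriv_unique; eauto).
    apply riesz_from_bound.
    { intros; apply ess_nonneg. }
    intros eps Heps.
    destruct (Hc x0 Hx0 eps Heps) as [eta [Heta Hnear]].
    destruct (UC phi g Hmap Hd x0 Hint eta Heta) as [N HN].
    destruct (cont_bounded g Hc) as [G0 [HG00 HG0]].
    set (G := G0 + 1).
    assert (HG : forall y, in01 y -> Rabs (g y) <= G) by (intros y Hy; pose proof (HG0 y Hy); unfold G; lra).
    assert (Htail : forall k y, (N <= k)%nat -> in01 y -> Rabs (g (Nat.iter k phi y)) <= eps).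
    { intros k y Hk Hy. specialize (HN k y Hk Hy).
      specialize (Hnear (Nat.iter k phi y) (iter_in phi Hmap k y Hy) HN). rewrite Hg0, Rminus_0_r in Hnear. lra. }
    set (C := 2 * (G / eps) ^ N).
    assert (HGp : 0 < G) by (unfold G; lra).
    exists C, N. split; [unfold C; apply Rmult_lt_0_compat; [lra|apply pow_lt, Rdiv_lt_0_compat; lra]|].
    intros n Hn. replace n with (N + (n - N))%nat by lia.
    eapply Rle_trans; [eapply (E_upper phi g Hmap Hd _ (G ^ N * eps ^ (n - N)))|].
    + apply Rmult_le_pos; [apply pow_le; lra|]. apply pow_le; lra.
    + intros x Hx. apply (Dn_bound_tail phi g Hmap G N eps); auto; lra.
    + right. unfold C. rewrite pow_add. unfold Rdiv. rewrite Rpow_mult_distr, pow_inv. field.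
      apply pow_nonzero; lra.
Qed.
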